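(* Let $X\subseteq\mathbb{R}^n$ be a nonempty closed convex set with $0\in X$, $\|\cdot\|$ the Euclidean norm, $D(x\|x')=\tfrac12\|x-x'\|^2$, and suppose $\max_{x,x'\in X}D(x\|x')\le F^2$. Let $\tau\in\mathbb{N}$ with $\tau\ge1$, $T\in\mathbb{N}$, and let $f_1,\dots,f_{T+\tau}:\mathbb{R}^n\to\mathbb{R}$ be convex differentiable functions with $\|\nabla f_t(x)\|\le L$ for all $x\in X$ and all $t$. Run delayed stochastic gradient descent: $x_1=\dots=x_{\tau+1}=0$, $g_t=\nabla f_t(x_t)$, and for $t=\tau+1,\dots,T+\tau$, $x_{t+1}=\operatorname{argmin}_{x\in X}\|x-(x_t-\eta_t g_{t-\tau})\|$, with $\eta_t=\sigma/\sqrt{t-\tau}$ for a constant $\sigma>0$. Let $x^*\in X$ be a minimizer over $X$ of the average risk $f^*(x)=\frac1T\sum_{t=1}^T f_t(x)$, and let $R[X]=\sum_{t=1}^T\big(f_t(x_t)-f_t(x^* )\big)$. Then $$R[X]\le \sigma L^2\sqrt T+F^2\frac{\sqrt T}{\sigma}+L^2\frac{\sigma\tau^2}{2}+2L^2\sigma\tau\sqrt T,$$ and consequently, for $\sigma^2=\frac{F^2}{2\tau L^2}$ and $T\ge\tau^2$, $$R[X]\le 4FL\sqrt{\tau T}.$$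
   Context: Delayed stochastic gradient descent updates the parameter with the gradient computed $\tau$ steps earlier, then projects onto $X$. ''Lipschitz continuous with constant $L$'' for the cost functions means the gradient bound $\|\nabla f_t(x)\|\le L$. *)

(* Defs.v *)
From HB Require Import structures.
From mathcomp Require Import all_boot all_order all_algebra.
From mathcomp Require Import reals.
Set Implicit Arguments. Unset Strict Implicit. Unset Printing Implicit Defensive.
Import Order.TTheory GRing.Theory Num.Theory.
Local Open Scope ring_scope.

Section Defs.
Variables (R : realType) (n : nat).
Notation vec := 'rV[R]_n.

Definition dotv (u v : vec) : R := \sum_(i < n) u ord0 i * v ord0 i.
Definition enorm (u : vec) : R := Num.sqrt (dotv u u).

Definition Dsq (x x' : vec) : R := 2^-1 * enorm (x - x') ^+ 2.

Definition convex_set (X : vec -> Prop) : Prop :=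
  forall x y (l : R), X x -> X y -> 0 <= l -> l <= 1 -> X (l *: x + (1 - l) *: y).

Definition closed_set (X : vec -> Prop) : Prop :=
  forall x, (forall eps : R, 0 < eps -> exists y, X y /\ enorm (y - x) < eps) -> X x.

Definition convex_fun (f : vec -> R) : Prop :=
  forall x y (l : R), 0 <= l -> l <= 1 ->
    f (l *: x + (1 - l) *: y) <= l * f x + (1 - l) * f y.

Definition is_gradient (f : vec -> R) (x g : vec) : Prop :=
  forall eps : R, 0 < eps -> exists delta : R, 0 < delta /\
    forall y, enorm (y - x) < delta ->
      `| f y - f x - dotv g (y - x) | <= eps * enorm (y - x).

Definition is_proj (X : vec -> Prop) (z p : vec) : Prop :=
  X p /\ forall y, X y -> enorm (p - z) <= enorm (y - z).

End Defs.

(* Main.v *)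
Require Import Defs.
From HB Require Import structures.
From mathcomp Require Import all_boot all_order all_algebra.
From mathcomp Require Import reals ring lra zify.
Import Order.TTheory GRing.Theory Num.Theory.
Set Implicit Arguments. Unset Strict Implicit. Unset Printing Implicit Defensive.
Local Open Scope ring_scope.

Section H.
Variables (R : realType) (n : nat).
Notation vec := 'rV[R]_n.

Lemma dotvC (u v : vec) : dotv u v = dotv v u.
Proof. by apply: eq_bigr => i _; rewrite mulrC. Qed.

Lemma dotvDl (u w v : vec) : dotv (u + w) v = dotv u v + dotv w v.
Proof. by rewrite /dotv -big_split; apply: eq_bigr => i _; rewrite !mxE mulrDl. Qed.

Lemma dotvZl (a : R) (u v : vec) : dotv (a *: u) v = a * dotv u v.
Proof. rewrite /dotv mulr_sumr; apply: eq_bigr => i _; rewrite !mxE; ring. Qed.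

Lemma dotvDr (u w v : vec) : dotv v (u + w) = dotv v u + dotv v w.
Proof. by rewrite dotvC dotvDl !(dotvC v). Qed.

Lemma dotvZr (a : R) (u v : vec) : dotv v (a *: u) = a * dotv v u.
Proof. by rewrite dotvC dotvZl (dotvC v). Qed.

Lemma dotvNl (u v : vec) : dotv (- u) v = - dotv u v.
Proof. by rewrite -scaleN1r dotvZl mulN1r. Qed.

Lemma dotvNr (u v : vec) : dotv v (- u) = - dotv v u.
Proof. by rewrite dotvC dotvNl dotvC. Qed.

Lemma dotv0r (v : vec) : dotv v 0 = 0.
Proof. by rewrite /dotv big1 // => i _; rewrite mxE mulr0. Qed.

Lemma dotv_ge0 (u : vec) : 0 <= dotv u u.
Proof. by apply: sumr_ge0 => i _; rewrite -expr2 sqr_ge0. Qed.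

Lemma enorm_ge0 (u : vec) : 0 <= enorm u.
Proof. exact: sqrtr_ge0. Qed.

Lemma enorm_sq (u : vec) : enorm u ^+ 2 = dotv u u.
Proof. by rewrite sqr_sqrtr // dotv_ge0. Qed.

Lemma dotv_sqD (u v : vec) :
  dotv (u + v) (u + v) = dotv u u + 2 * dotv u v + dotv v v.
Proof. rewrite dotvDl !dotvDr (dotvC v u); ring. Qed.

Lemma CS2 (u v : vec) : dotv u v ^+ 2 <= dotv u u * dotv v v.
Proof.
set a := dotv u u; set b := dotv v v; set c := dotv u v.
have key : forall l : R, 0 <= l ^+ 2 * a - 2 * l * c + b.
  move=> l; have := dotv_ge0 (l *: u + - v).
  rewrite dotv_sqD !dotvZl !dotvZr !dotvNl !dotvNr opprK -/a -/b -/c.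
  move=> h; apply: (le_trans h); rewrite le_eqVlt; apply/orP; left; apply/eqP; ring.
have a0 : 0 <= a by exact: dotv_ge0.
case: (ltrP 0 a) => ha.
  have := key (c / a).
  have -> : (c / a) ^+ 2 * a - 2 * (c / a) * c + b = (a * b - c ^+ 2) / a.
    by field; apply/negP => /eqP h; rewrite h ltxx in ha.
  by rewrite ler_pdivlMr // mul0r subr_ge0.
have a00 : a = 0 by apply/eqP; rewrite eq_le ha a0.
case: (eqVneq c 0) => hc; first by rewrite hc expr0n /= a00 mul0r.
have := key ((b + 1) / (2 * c)).
have -> : ((b + 1) / (2 * c)) ^+ 2 * a - 2 * ((b + 1) / (2 * c)) * c + b = -1.
  rewrite a00; field; exact: hc.
by rewrite lerNr oppr0 ler10.
Qed.

Lemma CS (u v : vec) : `|dotv u v| <= enorm u * enorm v.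
Proof.
rewrite -sqrtr_sqr /enorm -sqrtrM ?dotv_ge0 // ler_sqrt ?CS2 //.
by rewrite mulr_ge0 ?dotv_ge0.
Qed.

Lemma enormZ (a : R) (u : vec) : enorm (a *: u) = `|a| * enorm u.
Proof.
by rewrite /enorm dotvZl dotvZr mulrA -expr2 sqrtrM ?sqr_ge0 // sqrtr_sqr.
Qed.


Lemma small_le (A B : R) : 0 <= B ->
  (forall e : R, 0 < e -> e <= 1 -> A <= e * B) -> A <= 0.
Proof.
move=> hB H; case: (lerP A 0) => // hA; exfalso.
have hAB : 0 < A + 2 * B by lra.
have := H (A / (A + 2 * B)).
rewrite divr_gt0 // ler_pdivrMr // mul1r.
have -> : A / (A + 2 * B) * B = (A * B) / (A + 2 * B) by rewrite mulrAC.
rewrite ler_pdivlMr //.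
have : 0 < A * A by rewrite mulr_gt0.
have : 0 <= A * B by rewrite mulr_ge0 // ltW.
move=> h1 h2 h3; have h4 : A <= A + 2 * B by lra.
have := h3 isT h4; nra.
Qed.

Lemma grad_ineq (f : vec -> R) (x y g : vec) :
  convex_fun f -> is_gradient f x g -> dotv g (y - x) <= f y - f x.
Proof.
move=> cf hg.
set N := enorm (y - x).
have hN : 0 <= N by exact: enorm_ge0.
rewrite -subr_le0; apply: (small_le (B:=N) hN) => e he _.
have [delta [hd Hd]] := hg e he.
have hND : 0 < N + delta by lra.
set l := delta / (2 * (N + delta)).
have hl : 0 < l by rewrite divr_gt0 // mulr_gt0.
have hl1 : l <= 1.
  by rewrite ler_pdivrMr ?mulr_gt0 // mul1r; lra.
have hlN : l * N < delta.
  rewrite /l mulrAC ltr_pdivrMr ?mulr_gt0 //; nra.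
set w := l *: y + (1 - l) *: x.
have hw : w - x = l *: (y - x).
  by apply/rowP => j; rewrite !mxE; ring.
have hwn : enorm (w - x) = l * N by rewrite hw enormZ gtr0_norm.
have := Hd w; rewrite hwn => /(_ hlN).
rewrite hw dotvZr => /ler_normlP [h1 _].
have hc := cf y x l (ltW hl) hl1.
rewrite -/w in hc.
set D := dotv g (y - x) in h1 *.
have : l * (D - (f y - f x)) <= l * (e * N) by nra.
by rewrite ler_pM2l.
Qed.

Lemma proj_le (X : vec -> Prop) (z p y : vec) :
  convex_set X -> is_proj X z p -> X y ->
  dotv (p - y) (p - y) <= dotv (z - y) (z - y).
Proof.
move=> cX [Xp Hp] Xy.
set c := dotv (p - z) (y - p).
set b := dotv (y - p) (y - p).
have hb : 0 <= b by exact: dotv_ge0.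
have hc : 0 <= c.
  rewrite -(ler_pM2l (ltr0n R 2)) mulr0 -oppr_le0.
  apply: (small_le (B:=b) hb) => l hl hl1.
  have Xw := cX y p l Xy Xp (ltW hl) hl1.
  have := Hp _ Xw.
  rewrite /enorm ler_sqrt ?dotv_ge0 //.
  have -> : l *: y + (1 - l) *: p - z = (p - z) + l *: (y - p).
    by apply/rowP => j; rewrite !mxE; ring.
  rewrite (dotv_sqD (p - z)) dotvZl !dotvZr -/c -/b => h.
  have : l * (- (2 * c)) <= l * (l * b) by nra.
  by rewrite ler_pM2l.
have -> : z - y = (p - y) + - (p - z).
  by apply/rowP => j; rewrite !mxE; ring.
rewrite (dotv_sqD (p - y)) dotvNr dotvNl dotvNr opprK.
have -> : dotv (p - y) (p - z) = - c.
  rewrite /c dotvC -dotvNr; congr dotv.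
  by apply/rowP => j; rewrite !mxE; ring.
have := dotv_ge0 (p - z); lra.
Qed.


Lemma inv_sqrt_le (k : nat) :
  (Num.sqrt k%:R)^-1 <= 2 * (Num.sqrt k%:R - Num.sqrt k.-1%:R :> R).
Proof.
case: k => [|k]; first by rewrite sqrtr0 invr0 subr0 mulr0.
rewrite /= -addn1 natrD.
set a := Num.sqrt (k%:R + 1 : R); set b := Num.sqrt (k%:R : R).
have hk : (0 : R) <= k%:R by exact: ler0n.
have ha2 : a ^+ 2 = k%:R + 1 by rewrite sqr_sqrtr //; lra.
have hb2 : b ^+ 2 = k%:R by rewrite sqr_sqrtr.
have hb : 0 <= b by exact: sqrtr_ge0.
have ha : 0 < a by rewrite sqrtr_gt0; lra.
rewrite -[a^-1]mul1r ler_pdivrMr //.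
have hba : b <= a by rewrite ler_sqrt; lra.
nra.
Qed.

Lemma telescope (s : nat -> R) (T : nat) :
  \sum_(1 <= t < T.+1) (s t - s t.-1) = s T - s 0%N.
Proof.
elim: T => [|T IH]; first by rewrite big_geq // subrr.
by rewrite big_nat_recr //= IH; ring.
Qed.

Lemma sum_inv_sqrt_shift (T i tau : nat) : (i < tau)%N ->
  \sum_(1 <= t < T.+1) (Num.sqrt (t + i - tau)%:R)^-1 <= 2 * Num.sqrt T%:R :> R.
Proof.
move=> hi.
apply: (@le_trans _ _ (\sum_(1 <= t < T.+1)
   2 * (Num.sqrt (t + i - tau)%:R - Num.sqrt (t.-1 + i - tau)%:R))).
  apply: ler_sum_nat => t /andP [ht _].
  have -> : (t.-1 + i - tau = (t + i - tau).-1)%N by case: t ht => //= t _; lia.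
  exact: inv_sqrt_le.
rewrite -mulr_sumr (telescope (fun t => Num.sqrt (t + i - tau)%:R)).
have -> : (0 + i - tau = 0)%N by lia.
rewrite sqrtr0 subr0 ler_pM2l // ler_sqrt ?ler_nat ?ler0n //; lia.
Qed.

Lemma sum_inv_sqrt (T : nat) :
  \sum_(1 <= t < T.+1) (Num.sqrt t%:R)^-1 <= 2 * Num.sqrt T%:R :> R.
Proof.
apply: (@le_trans _ _ (\sum_(1 <= t < T.+1)
   2 * (Num.sqrt t%:R - Num.sqrt t.-1%:R))).
  by apply: ler_sum_nat => t _; exact: inv_sqrt_le.
rewrite -mulr_sumr (telescope (fun t => Num.sqrt t%:R)).
by rewrite sqrtr0 subr0.
Qed.
Lemma abel (b w : nat -> R) (M : R) (T : nat) :
  (forall t, (1 <= t <= T.+1)%N -> 0 <= b t <= M) ->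
  (forall t, 0 <= w t) -> (forall t, w t <= w t.+1) ->
  \sum_(1 <= t < T.+1) (b t - b t.+1) * w t <= M * w T.
Proof.
move=> Hb Hw0 Hw.
suff : \sum_(1 <= t < T.+1) (b t - b t.+1) * w t <= M * w T - b T.+1 * w T.
  have := Hb T.+1; rewrite leqnn andbT => /(_ isT) /andP [h1 _].
  have := Hw0 T; nra.
elim: T Hb => [|T IH] Hb.
  rewrite big_geq //.
  have := Hb 1%N isT => /andP [_ h]; have := Hw0 0%N; nra.
rewrite big_nat_recr //=.
have := IH (fun t ht => Hb t ltac:(lia)).
have := Hb T.+1 ltac:(lia) => /andP [h1 h2].
have := Hb T.+2 ltac:(lia) => /andP [h3 h4].
have := Hw T; have := Hw0 T; have := Hw0 T.+1.
nra.
Qed.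

Lemma dot_tele (g z : vec) (y : nat -> vec) (k : nat) :
  dotv g (y 0%N - z) = dotv g (y k - z) + \sum_(i < k) dotv g (y i - y i.+1).
Proof.
elim: k => [|k IH]; first by rewrite big_ord0 addr0.
rewrite big_ord_recr /= IH addrA -[in RHS]addrAC -[in RHS]dotvDr; congr (_ + _).
by congr dotv; apply/rowP => j; rewrite !mxE; ring.
Qed.

Lemma alg_final (F L s tau q : R) : 0 < s -> 0 < L -> 0 <= F -> 1 <= tau -> 0 <= q ->
  s ^+ 2 = F ^+ 2 / (2 * tau * L ^+ 2) ->
  s * L ^+ 2 * q + F ^+ 2 * (q / s) + 2 * L ^+ 2 * s * tau * q
   <= 4 * F * L * (Num.sqrt tau * q).
Proof.
move=> hs hL hF ht hq hsig.
have hF2 : F ^+ 2 = 2 * tau * L ^+ 2 * s ^+ 2.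
  by rewrite hsig; field; rewrite !gt_eqF //; lra.
set r := Num.sqrt tau.
have hr2 : r ^+ 2 = tau by rewrite sqr_sqrtr //; lra.
have hr : 0 < r by rewrite sqrtr_gt0; lra.
have -> : F ^+ 2 * (q / s) = 2 * tau * L ^+ 2 * s * q.
  rewrite hF2; field; rewrite gt_eqF //.
have key : s * L ^+ 2 * (1 + 4 * tau) <= 4 * F * L * r.
  have h0 : 0 <= 4 * F * L * r by rewrite !mulr_ge0 // ?ltW.
  have hsq : (s * L ^+ 2 * (1 + 4 * tau)) ^+ 2 <= (4 * F * L * r) ^+ 2.
    have -> : (4 * F * L * r) ^+ 2 = 16 * F ^+ 2 * L ^+ 2 * r ^+ 2 by ring.
    rewrite hF2 hr2.
    have : 0 <= s ^+ 2 * L ^+ 4 by rewrite mulr_ge0 // ?exprn_ge0 // ltW.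
    move=> h; have : 0 <= (16 * tau ^+ 2 - 8 * tau - 1) by nra.
    move=> h'; have := mulr_ge0 h h'. move=> hh.
    have E : 16 * (2 * tau * L ^+ 2 * s ^+ 2) * L ^+ 2 * tau - (s * L ^+ 2 * (1 + 4 * tau)) ^+ 2
       = s ^+ 2 * L ^+ 4 * (16 * tau ^+ 2 - 8 * tau - 1) by ring.
    by rewrite -subr_ge0 E.
  rewrite -ler_sqrt ?exprn_ge0 // !sqrtr_sqr !ger0_norm // in hsq.
  by rewrite !mulr_ge0 // ?ltW //; lra.
have E : s * L ^+ 2 * q + 2 * tau * L ^+ 2 * s * q + 2 * L ^+ 2 * s * tau * q
   = (s * L ^+ 2 * (1 + 4 * tau)) * q by ring.
rewrite E mulrA.
have := ler_wpM2r hq key; by [] || nra.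
Qed.

End H.

Theorem theorem2 (R : realType) (n : nat) (X : 'rV[R]_n -> Prop)
  (F L sigma : R) (tau T : nat)
  (f : nat -> 'rV[R]_n -> R) (grad : nat -> 'rV[R]_n -> 'rV[R]_n)
  (x : nat -> 'rV[R]_n) (xstar : 'rV[R]_n) :
  closed_set X -> convex_set X -> X 0 ->
  (forall y y', X y -> X y' -> Dsq y y' <= F ^+ 2) ->
  (1 <= tau)%N ->
  (forall t, (1 <= t <= T + tau)%N -> convex_fun (f t)) ->
  (forall t, (1 <= t <= T + tau)%N -> forall y, is_gradient (f t) y (grad t y)) ->
  (forall t, (1 <= t <= T + tau)%N -> forall y, X y -> enorm (grad t y) <= L) ->
  0 < sigma ->
  (forall t, (1 <= t <= tau.+1)%N -> x t = 0) ->
  (forall t, (tau.+1 <= t <= T + tau)%N ->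
     is_proj X (x t - (sigma / Num.sqrt (t - tau)%:R) *: grad (t - tau)%N (x (t - tau)%N))
             (x t.+1)) ->
  X xstar ->
  (forall y, X y -> T%:R^-1 * (\sum_(1 <= t < T.+1) f t xstar)
                    <= T%:R^-1 * (\sum_(1 <= t < T.+1) f t y)) ->
  let regret := \sum_(1 <= t < T.+1) (f t (x t) - f t xstar) in
  regret <= sigma * L ^+ 2 * Num.sqrt T%:R + F ^+ 2 * (Num.sqrt T%:R / sigma)
            + L ^+ 2 * (sigma * (tau ^ 2)%:R / 2) + 2 * L ^+ 2 * sigma * tau%:R * Num.sqrt T%:R
  /\ (0 <= F -> sigma ^+ 2 = F ^+ 2 / (2 * tau%:R * L ^+ 2) -> (tau ^ 2 <= T)%N ->
      regret <= 4 * F * L * Num.sqrt (tau%:R * T%:R)).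
Proof.
move=> _ cX X0 HF htau Hconv Hgrad HL hs Hx0 Hupd Xs _ regret.
have L0 : 0 <= L.
  have h1 : (1 <= 1 <= T + tau)%N by lia.
  have := HL 1%N h1 0 X0; have := enorm_ge0 (grad 1%N 0); lra.
have Xx : forall t, (1 <= t <= T + tau + 1)%N -> X (x t).
  move=> t ht; case: (leqP t tau.+1) => h.
    by rewrite Hx0 //; lia.
  case: t ht h => [|t] ht h; first by lia.
  by case: (Hupd t ltac:(lia)).
pose g t := grad t (x t).
pose a s := dotv (x s - xstar) (x s - xstar).
have hgL : forall t, (1 <= t <= T + tau)%N -> enorm (g t) <= L.
  by move=> t ht; apply: HL => //; apply: Xx; lia.
have hG : forall t, (1 <= t <= T + tau)%N -> dotv (g t) (g t) <= L ^+ 2.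
  move=> t ht; rewrite -enorm_sq; have := hgL t ht; have := enorm_ge0 (g t).
  by move=> h1 h2; rewrite ler_pXn2r ?nnegrE.
have step : forall t, (1 <= t <= T)%N ->
  f t (x t) - f t xstar <=
    (a (t + tau)%N - a (t.+1 + tau)%N) * (Num.sqrt t%:R / (2 * sigma))
    + sigma * L ^+ 2 / 2 * (Num.sqrt t%:R)^-1
    + \sum_(i < tau) sigma * L ^+ 2 * (Num.sqrt (t + i - tau)%:R)^-1.
  move=> t ht.
  have h1 : f t (x t) - f t xstar <= dotv (g t) (x t - xstar).
    have := grad_ineq xstar (Hconv t ltac:(lia)) (Hgrad t ltac:(lia) (x t)).
    have -> : x t - xstar = - (xstar - x t) by apply/rowP => j; rewrite !mxE; ring.
    rewrite dotvNr -/(g t); lra.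
  have h2 := dot_tele (g t) xstar (fun i => x (t + i)%N) tau.
  rewrite /= addn0 in h2.
  apply: (le_trans h1); rewrite h2.
  apply: lerD.
  -
    set s := (t + tau)%N.
    have Hp := Hupd s ltac:(lia).
    have e : (s - tau = t)%N by rewrite /s addnK.
    rewrite e in Hp.
    rewrite -/(g t) in Hp.
    have := proj_le cX Hp Xs.
    set q := Num.sqrt t%:R.
    have hq : 0 < q by rewrite sqrtr_gt0 ltr0n; lia.
    set eta := sigma / q.
    have heta : 0 < eta by rewrite divr_gt0.
    have -> : x s - eta *: g t - xstar = (x s - xstar) + (- eta) *: g t.
      by apply/rowP => j; rewrite !mxE; ring.
    rewrite (dotv_sqD (x s - xstar)) dotvZl !dotvZr (dotvC (x s - xstar)).
    have -> : (t.+1 + tau = s.+1)%N by rewrite /s addSn.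
    rewrite -/(a s) -/(a s.+1).
    have hGt := hG t ltac:(lia).
    set D := dotv (g t) (x s - xstar) => h.
    have E : (a s - a s.+1) * (q / (2 * sigma)) + sigma * L ^+ 2 / 2 * q^-1
      = (a s - a s.+1 + eta ^+ 2 * L ^+ 2) / (2 * eta).
      by rewrite /eta; field; rewrite !gt_eqF.
    rewrite E ler_pdivlMr ?mulr_gt0 ?invr_gt0 //.
    have : eta ^+ 2 * dotv (g t) (g t) <= eta ^+ 2 * L ^+ 2.
      by rewrite ler_pM2l // exprn_gt0.
    nra.
  - apply: ler_sum => i _.
    rewrite addnS.
    have hi := ltn_ord i.
    have hjr : (1 <= t + i < T + tau)%N by lia.
    set j := (t + i)%N in hjr *; clearbody j.
    have hc0 : 0 <= sigma * L ^+ 2 * (Num.sqrt (j - tau)%:R)^-1.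
      by rewrite !mulr_ge0 ?invr_ge0 ?sqrtr_ge0 ?sqr_ge0 // ltW.
    case: (leqP j tau) => hj.
      have e1 : x j = 0 by apply: Hx0; lia.
      have e2 : x j.+1 = 0 by apply: Hx0; lia.
      by rewrite e1 e2 subrr dotv0r.
    have Hp := Hupd j ltac:(lia).
    have hk : (1 <= j - tau <= T + tau)%N by lia.
    set k := (j - tau)%N in Hp hc0 hk *; clearbody k.
    set q := Num.sqrt k%:R in Hp hc0 *.
    have hq : 0 < q by rewrite sqrtr_gt0 ltr0n; lia.
    set eta := sigma / q in Hp.
    have heta : 0 < eta by rewrite divr_gt0.
    have := proj_le cX Hp (Xx j ltac:(lia)).
    have -> : x j - eta *: grad k (x k) - x j = (- eta) *: grad k (x k).
      by apply/rowP => l; rewrite !mxE; ring.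
    rewrite dotvZl dotvZr mulrA -expr2 sqrrN => hd.
    have hGk := hG k hk; rewrite -/(g k) in hd.
    have hd2 : dotv (x j.+1 - x j) (x j.+1 - x j) <= (eta * L) ^+ 2.
      rewrite exprMn; apply: (le_trans hd); rewrite ler_pM2l // exprn_gt0 //.
    have hn : enorm (x j.+1 - x j) <= eta * L.
      rewrite /enorm -(ger0_norm (mulr_ge0 (ltW heta) L0)) -sqrtr_sqr ler_sqrt //.
      exact: sqr_ge0.
    have -> : x j - x j.+1 = - (x j.+1 - x j) by apply/rowP => l; rewrite !mxE; ring.
    rewrite dotvNr.
    apply: (le_trans (ler_norm _)); rewrite normrN.
    apply: (le_trans (CS _ _)).
    have hgt := hgL t ltac:(lia).
    have -> : sigma * L ^+ 2 * q^-1 = L * (eta * L) by rewrite /eta; ring.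
    apply: ler_pM => //; [exact: enorm_ge0 | exact: enorm_ge0].
have hsum : regret <= F ^+ 2 * (Num.sqrt T%:R / sigma) + sigma * L ^+ 2 * Num.sqrt T%:R
     + 2 * L ^+ 2 * sigma * tau%:R * Num.sqrt T%:R.
  rewrite /regret; apply: le_trans.
    apply: ler_sum_nat => t ht; exact: step.
  rewrite !big_split /=.
  have hA : \sum_(1 <= t < T.+1) (a (t + tau)%N - a (t.+1 + tau)%N) * (Num.sqrt t%:R / (2 * sigma))
       <= 2 * F ^+ 2 * (Num.sqrt T%:R / (2 * sigma)).
    apply: (abel (b := fun t => a (t + tau)%N) (w := fun t => Num.sqrt t%:R / (2 * sigma))).
    + move=> t ht; apply/andP; split; first exact: dotv_ge0.
      have := HF _ _ (Xx (t + tau)%N ltac:(lia)) Xs.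
      rewrite /Dsq enorm_sq -/(a _); lra.
    + by move=> t; rewrite divr_ge0 ?sqrtr_ge0 // mulr_ge0 // ltW.
    + move=> t; apply: ler_wpM2r; first by rewrite invr_ge0 mulr_ge0 // ltW.
      by rewrite ler_sqrt ?ler0n // ler_nat.
  have hB : \sum_(1 <= t < T.+1) sigma * L ^+ 2 / 2 / Num.sqrt t%:R
       <= sigma * L ^+ 2 * Num.sqrt T%:R.
    rewrite -mulr_sumr.
    have := sum_inv_sqrt R T.
    have : 0 <= sigma * L ^+ 2 / 2 by rewrite !mulr_ge0 ?invr_ge0 ?sqr_ge0 // ltW.
    nra.
  have hC : \sum_(1 <= t < T.+1) \sum_(i < tau) sigma * L ^+ 2 / Num.sqrt (t + i - tau)%:R
       <= 2 * L ^+ 2 * sigma * tau%:R * Num.sqrt T%:R.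
    rewrite exchange_big /=.
    apply: le_trans.
      apply: ler_sum => i _.
      rewrite -mulr_sumr.
      apply: ler_wpM2l; first by rewrite mulr_ge0 ?sqr_ge0 // ltW.
      exact: sum_inv_sqrt_shift.
    rewrite sumr_const card_ord -mulr_natr.
    rewrite le_eqVlt; apply/orP; left; apply/eqP; ring.
  have E : F ^+ 2 * (Num.sqrt T%:R / sigma) = 2 * F ^+ 2 * (Num.sqrt T%:R / (2 * sigma)).
    by field; rewrite gt_eqF.
  rewrite E; apply: lerD; first apply: lerD.
  - exact: hA.
  - exact: hB.
  - exact: hC.
have htau0 : (1 : R) <= tau%:R by rewrite ler1n.
split.
  apply: le_trans hsum _.
  have : 0 <= L ^+ 2 * (sigma * (tau ^ 2)%:R / 2).
    by rewrite !mulr_ge0 ?sqr_ge0 ?invr_ge0 ?ler0n // ltW.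
  lra.
move=> hF hsig _.
apply: le_trans hsum _.
have hL : 0 < L.
  rewrite lt_neqAle L0 andbT; apply/negP => /eqP hL0.
  move: hsig; rewrite -hL0 expr0n /= mulr0 invr0 mulr0 => /eqP.
  by rewrite expf_eq0 /= gt_eqF.
rewrite sqrtrM ?ler0n //.
have := alg_final hs hL hF htau0 (sqrtr_ge0 T%:R) hsig.
lra.
Qed.
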